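(* Let $r>0$ and $t\ge1$ be real numbers, and set $p=\lceil tr\rceil-\lceil r\rceil$ and $q=\lceil r\rceil-1$. Consider any nonincreasing sequence of nonnegative reals $$t-1,\ a_1,a_2,\dots,a_p,\ b_1,b_2,\dots,b_q$$ (of total length $\lceil tr\rceil$) in which $a_1,\dots,a_p$ is an arithmetic progression with common difference $-1/r$. If $t-1-a_1\le 1/r$ (a condition that is vacuous when $p=0$), then the average of the entire sequence is at least $\frac{t-2+1/t}{2}$. *)

(* Defs.v *)
From mathcomp Require Import all_boot all_order all_algebra.
From mathcomp Require Import reals.
Set Implicit Arguments. Unset Strict Implicit. Unset Printing Implicit Defensive.
Import Order.TTheory GRing.Theory Num.Theory.
Local Open Scope ring_scope.

(* The sequence  t-1, a_1, ..., a_p, b_1, ..., b_q  (a_i is [a (i-1)], b_j is [b (j-1)]). *)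
Definition the_seq (R : realType) (t : R) (a b : nat -> R) (p q : nat) : seq R :=
  (t - 1) :: [seq a i | i <- iota 0 p] ++ [seq b j | j <- iota 0 q].

Definition avg (R : realType) (s : seq R) : R :=
  (\sum_(x <- s) x) / (size s)%:R.

(* Main.v *)
Require Import Defs.
From mathcomp Require Import all_boot all_order all_algebra.
From mathcomp Require Import reals.
From mathcomp Require Import zify ring lra.
Import Order.TTheory GRing.Theory Num.Theory.
Local Open Scope ring_scope.

Lemma sum_lin (R : realType) (x r : R) (m : nat) : r != 0 ->
  \sum_(i <- iota 0 m) (x - (i.+1)%:R / r) = m%:R * x - (m * m.+1)%:R / 2 / r.
Proof.
move=> r0; elim: m => [|m IH]; first by rewrite big_nil mul0r mul0n !mul0r subr0.
rewrite -addn1 iotaD big_cat /= big_seq1 IH add0n.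
rewrite !natrD !natrM !natrD /=. by field.
Qed.

Theorem mainTheorem16 (R : realType) (r t : R) (p q : nat) (a b : nat -> R) :
  0 < r -> 1 <= t ->
  p%:Z = Num.ceil (t * r) - Num.ceil r ->
  q%:Z = Num.ceil r - 1 ->
  sorted (fun x y => y <= x) (the_seq t a b p q) ->
  all (fun x => 0 <= x) (the_seq t a b p q) ->
  (forall i : nat, (i.+1 < p)%N -> a i.+1 = a i - 1 / r) ->
  ((0 < p)%N -> t - 1 - a 0%N <= 1 / r) ->
  (t - 2 + 1 / t) / 2 <= avg (the_seq t a b p q).
Proof.
move=> r0 t1 hp hq _ Hall Har Ha0.
have Hsum : \sum_(y <- the_seq t a b p q) y
   = (t-1) + \sum_(i <- iota 0 p) a i + \sum_(j <- iota 0 q) b j.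
  by rewrite /the_seq big_cons big_cat !big_map addrA.
have Hsize : size (the_seq t a b p q) = (p+q).+1.
  by rewrite /= size_cat !size_map !size_iota.
have Hapos : forall i, (i < p)%N -> 0 <= a i.
  move=> i ip; move/allP: Hall; apply; rewrite /the_seq inE mem_cat.
  by apply/orP; right; apply/orP; left; apply/mapP; exists i => //; rewrite mem_iota.
have Hbpos : 0 <= \sum_(j <- iota 0 q) b j.
  rewrite big_seq; apply: sumr_ge0 => j jq; move/allP: Hall; apply.
  by rewrite /the_seq inE mem_cat; apply/orP; right; apply/orP; right; apply/mapP; exists j.
have Haform : forall i, (i < p)%N -> a i = a 0%N - i%:R / r.
  elim=> [|i IH] ip; first by rewrite mul0r subr0.
  rewrite Har // IH; last by apply: ltnW.
  rewrite -[i.+1]addn1 natrD mulrDl; lra.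
have Halow : forall i, (i < p)%N -> t - 1 - i.+1%:R / r <= a i.
  move=> i ip; rewrite Haform // -[i.+1]addn1 natrD mulrDl.
  have := Ha0 (leq_ltn_trans (leq0n i) ip); lra.
set x := t - 1.
set mz := Num.floor (x * r).
have xr0 : 0 <= x * r by apply: mulr_ge0; rewrite /x; lra.
have mz0 : (0 <= mz)%R by rewrite /mz floor_ge0.
set m := `|mz|%N.
have mzm : mz = m%:Z by rewrite /m gez0_abs.
have mR : (m%:R : R) = mz%:~R by rewrite mzm.
have Hm1 : (m%:R : R) <= x * r by rewrite mR floor_le.
have Hm2 : x * r < m%:R + 1 by rewrite mR -[1]/(1%:~R) -rmorphD floorD1_gt.
have Nceil : ((p + q).+1 : int) = Num.ceil (t * r) by lia.
have c1 := ceilB1_lt r.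
have c2 := ceil_ge (t * r).
have mp : (m <= p)%N.
  have : ((mz + (Num.ceil r - 1)) %:~R : R) < (Num.ceil (t*r))%:~R.
    rewrite rmorphD /=. rewrite /x in Hm1. rewrite -mR. lra.
  rewrite ltr_int. lia.
have NR : ((p + q).+1%:R : R) < t * r + 1.
  have := ceilB1_lt (t * r). rewrite -Nceil rmorphB /=. lra.
have Hsa : \sum_(i <- iota 0 m) (x - i.+1%:R / r) <= \sum_(i <- iota 0 p) a i.
  rewrite -(subnKC mp) iotaD big_cat /= add0n.
  have h1 : \sum_(i <- iota 0 m) (x - i.+1%:R / r) <= \sum_(i <- iota 0 m) a i.
    rewrite [X in _ <= X]big_seq [X in X <= _]big_seq; apply: ler_sum => i.
    rewrite mem_iota add0n => /andP [_ im]; apply: Halow; exact: leq_trans im mp.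
  have h2 : 0 <= \sum_(i <- iota m (p - m)) a i.
    rewrite big_seq; apply: sumr_ge0 => i; rewrite mem_iota subnKC // => /andP [_ ip].
    exact: Hapos.
  lra.
rewrite sum_lin ?gt_eqF // in Hsa.
rewrite /avg Hsize Hsum.
have Npos : (0 : R) < (p + q).+1%:R by rewrite ltr0n.
have tpos : 0 < t by lra.
set S := (t - 1 + _ + _).
have key : r * x ^+ 2 + x <= 2 * S.
  have e : 2 * r * (m%:R * x - (m * m.+1)%:R / 2 / r + x) <= 2 * r * S.
    rewrite /S ler_pM2l; last by lra.
    have xd : x = t - 1 by []. lra.
  have e2 : 2 * r * (m%:R * x - (m * m.+1)%:R / 2 / r + x) = 2 * r * m%:R * x - m%:R * (m%:R + 1) + 2 * r * x.
    by rewrite natrM -addn1 natrD; field; rewrite lt0r_neq0.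
  rewrite e2 in e.
  have hf : 0 <= (x * r - m%:R) * (m%:R + 1 - x * r) by apply: mulr_ge0; lra.
  have id : (x * r - m%:R) * (m%:R + 1 - x * r) = 2 * r * m%:R * x - m%:R * (m%:R + 1) + 2 * r * x - r * (r * x ^+ 2 + x) - r * (2 * S) + 2 * r * S by ring.
  have : r * (r * x ^+ 2 + x) <= r * (2 * S) by lra.
  by rewrite ler_pM2l.
rewrite ler_pdivlMr //.
have hx : t - 2 + 1 / t = x ^+ 2 / t by rewrite /x; field; rewrite lt0r_neq0.
rewrite hx.
set N := ((p + q).+1%:R : R).
have y0 : 0 <= x ^+ 2 / t by apply: divr_ge0; [apply: sqr_ge0 | lra].
have h1 : x ^+ 2 / t * N <= x ^+ 2 / t * (t * r + 1) by apply: ler_wpM2l => //; lra.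
have h2 : x ^+ 2 / t * (t * r + 1) = r * x ^+ 2 + x ^+ 2 / t by field; rewrite lt0r_neq0.
have h3 : x ^+ 2 / t <= x.
  rewrite ler_pdivrMr // expr2; apply: ler_wpM2l; rewrite /x; lra.
have h4 : x ^+ 2 / t / 2 * N = x ^+ 2 / t * N / 2 by rewrite mulrAC.
rewrite h4 ler_pdivrMr; last by lra.
lra.
Qed.
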